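(* Let $n\ge1$, let $A_0,A_1\subseteq2^{<\omega}$, and let $C$ be $n$-fair for $A_0,A_1$. Let $(F,X)$ be a Mathias condition with $X$ $C$-computable. Let $m\ge1$, let $\varphi(G,U)$ be an $m$-by-$2^nm$ formula which is $\Sigma^0_1$ relative to $C$ and has an additional set parameter $G$, and let $M$ be an $m$-by-$2^nm$ disjoint matrix. Then there is a Mathias condition $(E,Y)$ extending $(F,X)$, with $Y$ $C$-computable, such that at least one of the following holds: (a) for every set $G$ satisfying $(E,Y)$, the formula $\varphi(G,U)$ is not essential in $M$; (b) $\varphi(E,V)$ holds for some $M$-valuation $V$ diagonalizing against $A_0,A_1$.
   Context: Mathias conditions. A Mathias condition is a pair $(F,X)$ with $F$ finite, $X$ infinite, and $\max F<\min X$. A condition $(E,Y)$ extends $(F,X)$ if $F\subseteq E$, $Y\subseteq X$, and $E\setminus F\subseteq X$. A set $G$ satisfies $(F,X)$ if $F\subseteq G$ and $G\setminus F\subseteq X$. Strings are finite binary strings, and $\preceq$ is the prefix relation. Two strings are incomparable if neither is a prefix of the other. Matrices. An $m$-by-$n$ matrix $M$ is an array of strings $\sigma_{i,j}$ ($i<m$, $j<n$), with rows $M(i)=(\sigma_{i,0},\dots,\sigma_{i,n-1})$. It is disjoint if each row consists of pairwise incomparable strings. Formulas. An $m$-by-$n$ formula is a formula with distinguished finite-set variables $U_{i,j}$. It is $\Sigma^{0,X}_1$ if it is $\Sigma^0_1$ relative to $X$. Valuations. An $M$-valuation is a tuple $V=(B_{i,j})$ of finite sets $B_{i,j}\subseteq\{\tau:\tau\succeq\sigma_{i,j}\}$.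 We write $\varphi(V)$ for $\varphi$ evaluated at $U_{i,j}:=B_{i,j}$, and $V(i)=(B_{i,0},\dots,B_{i,n-1})$. We write $V>s$ if all strings occurring in $V$ have length $>s$. Essential. $\varphi$ is essential in $M$ if for every $s$ there is an $M$-valuation $V>s$ with $\varphi(V)$. Diagonalization. An $M$-valuation $V$ diagonalizes against $A_0,A_1$ if for every $i<m$ there are components $L,R$ of $V(i)$ with $L\subseteq A_0$ and $R\subseteq A_1$. Fairness. For $n\ge1$, a set $X$ is $n$-fair for $A_0,A_1$ if the following holds: for every $m$, every $\Sigma^{0,X}_1$ $m$-by-$2^nm$ formula $\varphi$, and every $m$-by-$2^nm$ disjoint matrix $M$ in which $\varphi$ is essential, there is an $M$-valuation $V$ diagonalizing against $A_0,A_1$ with $\varphi(V)$. *)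

(* Defs.v *)
From mathcomp Require Import all_boot.
Set Implicit Arguments.
Unset Strict Implicit.
Unset Printing Implicit Defensive.

Inductive rcode :=
| RZero
| RSucc
| RProj of nat
| ROrc
| RComp of rcode & seq rcode
| RPrec of rcode & rcode
| RMu of rcode.

Inductive eval (O : nat -> bool) : rcode -> seq nat -> nat -> Prop :=
| evZero a : eval O RZero a 0
| evSucc a : eval O RSucc a (head 0 a).+1
| evProj i a : eval O (RProj i) a (nth 0 a i)
| evOrc a : eval O ROrc a (nat_of_bool (O (head 0 a)))
| evComp f gs a bs y : evals O gs a bs -> eval O f bs y -> eval O (RComp f gs) a y
| evPrec0 f g a y : eval O f a y -> eval O (RPrec f g) (0 :: a) y
| evPrecS f g n a z y : eval O (RPrec f g) (n :: a) z -> eval O g (n :: z :: a) y ->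
    eval O (RPrec f g) (n.+1 :: a) y
| evMu f a n : eval O f (n :: a) 0 ->
    (forall k, k < n -> exists v, eval O f (k :: a) v /\ v <> 0) ->
    eval O (RMu f) a n
with evals (O : nat -> bool) : seq rcode -> seq nat -> seq nat -> Prop :=
| evsNil a : evals O [::] a [::]
| evsCons g gs a b bs : eval O g a b -> evals O gs a bs -> evals O (g :: gs) a (b :: bs).

Definition computable_from (C X : nat -> bool) : Prop :=
  exists t, forall x, eval C t [:: x] (nat_of_bool (X x)).

Definition join (C G : nat -> bool) : nat -> bool :=
  fun x => if odd x then G x./2 else C x./2.

(* bijection 2^{<omega} -> nat *)
Fixpoint scode (s : seq bool) : nat :=
  match s with
  | [::] => 0
  | b :: s' => ((scode s').*2 + nat_of_bool b).+1
  end.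

(* finite sets of strings are represented by their canonical index D = sum 2^(scode tau) *)
Definition memS (tau : seq bool) (D : nat) : bool := odd (D %/ 2 ^ scode tau).

Definition subS (D : nat) (A : seq bool -> Prop) : Prop :=
  forall tau, memS tau D -> A tau.

Definition incomparable (s t : seq bool) : bool := ~~ prefix s t && ~~ prefix t s.

(* an m-by-k matrix: entry (i,j) for i < m, j < k *)
Definition matrix := nat -> nat -> seq bool.
(* a valuation: (i,j) |-> canonical index of the finite set B_{i,j} *)
Definition valuation := nat -> nat -> nat.

Definition disjoint_matrix (m k : nat) (M : matrix) : Prop :=
  forall i j j', i < m -> j < k -> j' < k -> j != j' -> incomparable (M i j) (M i j').

Definition is_valuation (m k : nat) (M : matrix) (V : valuation) : Prop :=
  forall i j tau, i < m -> j < k -> memS tau (V i j) -> prefix (M i j) tau.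

Definition val_gt (m k : nat) (V : valuation) (s : nat) : Prop :=
  forall i j tau, i < m -> j < k -> memS tau (V i j) -> s < size tau.

(* the input tuple (U_{i,j} := B_{i,j}) fed to a formula *)
Definition vargs (m k : nat) (V : valuation) : seq nat :=
  flatten [seq [seq V i j | j <- iota 0 k] | i <- iota 0 m].

Definition sigma1_in (O : nat -> bool) (m k : nat) (phi : valuation -> Prop) : Prop :=
  exists t, forall V, phi V <-> exists y, eval O t (vargs m k V) y.

Definition sigma1_param (C : nat -> bool) (m k : nat)
    (phi : (nat -> bool) -> valuation -> Prop) : Prop :=
  exists t, forall G V, phi G V <-> exists y, eval (join C G) t (vargs m k V) y.

Definition essential (m k : nat) (phi : valuation -> Prop) (M : matrix) : Prop :=
  forall s, exists V, [/\ is_valuation m k M V, val_gt m k V s & phi V].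

Definition diagonalizes (m k : nat) (V : valuation) (A0 A1 : seq bool -> Prop) : Prop :=
  forall i, i < m -> exists j1 j2, [/\ j1 < k, j2 < k, subS (V i j1) A0 & subS (V i j2) A1].

Definition fair (n : nat) (C : nat -> bool) (A0 A1 : seq bool -> Prop) : Prop :=
  forall (m : nat) (phi : valuation -> Prop) (M : matrix),
    sigma1_in C m (2 ^ n * m) phi ->
    disjoint_matrix m (2 ^ n * m) M ->
    essential m (2 ^ n * m) phi M ->
    exists V, [/\ is_valuation m (2 ^ n * m) M V, diagonalizes m (2 ^ n * m) V A0 A1 & phi V].

Definition finite_set (F : nat -> bool) : Prop := exists b, forall x, F x -> x < b.
Definition infinite_set (X : nat -> bool) : Prop := forall k, exists x, k <= x /\ X x.

Definition mathias (F X : nat -> bool) : Prop :=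
  [/\ finite_set F, infinite_set X & forall x y, F x -> X y -> x < y].

Definition mextends (E Y F X : nat -> bool) : Prop :=
  [/\ forall x, F x -> E x, forall x, Y x -> X x & forall x, E x -> ~~ F x -> X x].

Definition msatisfies (G F X : nat -> bool) : Prop :=
  (forall x, F x -> G x) /\ (forall x, G x -> ~~ F x -> X x).

(* Main.v *)
Require Import Defs.
From mathcomp Require Import all_boot zify.
From Stdlib Require Import Classical.
Set Implicit Arguments. Unset Strict Implicit. Unset Printing Implicit Defensive.

Section Gadgets.
Variable O : nat -> bool.

Lemma ev2 a b args u v : eval O a args u -> eval O b args v -> evals O [:: a; b] args [:: u; v].
Proof. by move=> Ha Hb; do 2 (apply: evsCons => //); apply: evsNil. Qed.
Lemma ev3 a b c args u v w : eval O a args u -> eval O b args v -> eval O c args w ->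
  evals O [:: a; b; c] args [:: u; v; w].
Proof. by move=> Ha Hb Hc; do 3 (apply: evsCons => //); apply: evsNil. Qed.
Lemma ev1 a args u : eval O a args u -> evals O [:: a] args [:: u].
Proof. by move=> Ha; apply: evsCons => //; apply: evsNil. Qed.

Lemma prec_eval f g a (h : nat -> nat) :
  eval O f a (h 0) -> (forall k, eval O g (k :: h k :: a) (h k.+1)) ->
  forall n, eval O (RPrec f g) (n :: a) (h n).
Proof. by move=> H0 HS; elim=> [|n IH]; [apply: evPrec0|apply: evPrecS (HS n)]. Qed.

Definition Succ x := RComp RSucc [:: x].
Lemma eSucc x args u : eval O x args u -> eval O (Succ x) args u.+1.
Proof. by move=> H; apply: evComp (ev1 H) _; apply: (evSucc O [:: u]). Qed.

Definition cst k := iter k Succ RZero.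
Lemma ecst k args : eval O (cst k) args k.
Proof. by elim: k => [|k IH] /=; [apply: evZero|apply: eSucc]. Qed.

Definition Pred x := RComp (RPrec RZero (RProj 0)) [:: x].
Lemma ePred x args u : eval O x args u -> eval O (Pred x) args u.-1.
Proof.
move=> H; apply: evComp (ev1 H) _.
apply: (prec_eval (h := predn)) => [|k]; first exact: evZero.
exact: (evProj O 0 [:: k; _]).
Qed.

Definition If0 x y z := RComp (RPrec (RProj 0) (RProj 3)) [:: x; y; z].
Lemma eIf0 x y z args u v w : eval O x args u -> eval O y args v -> eval O z args w ->
  eval O (If0 x y z) args (if u == 0 then v else w).
Proof.
move=> Hx Hy Hz; apply: evComp (ev3 Hx Hy Hz) _.
apply: (prec_eval (h := fun u => if u == 0 then v else w)) => [|k].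
  exact: (evProj O 0 [:: v; w]).
exact: (evProj O 3 [:: k; _; v; w]).
Qed.

Definition Cond x y := If0 x (cst 0) y.
Lemma eCond x y args u v : eval O x args u -> eval O y args v ->
  eval O (Cond x y) args (if u == 0 then 0 else v).
Proof. by move=> Hx Hy; apply: eIf0 => //; apply: ecst. Qed.

Definition ODD := RPrec RZero (If0 (RProj 1) (cst 1) (cst 0)).
Definition Odd x := RComp ODD [:: x].
Lemma eOdd x args u : eval O x args u -> eval O (Odd x) args (odd u).
Proof.
move=> H; apply: evComp (ev1 H) _.
apply: (prec_eval (h := fun u => nat_of_bool (odd u))) => [|k]; first exact: evZero.
have := eIf0 (evProj O 1 [:: k; nat_of_bool (odd k)]) (ecst 1 _) (ecst 0 _).
rewrite /=; by case: (odd k).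
Qed.

Definition Add x y := RComp (RPrec (RProj 0) (Succ (RProj 1))) [:: x; y].
Lemma eAdd x y args u v : eval O x args u -> eval O y args v -> eval O (Add x y) args (u + v).
Proof.
move=> Hx Hy; apply: evComp (ev2 Hx Hy) _.
apply: (prec_eval (h := fun u => u + v)) => [|k]; first exact: (evProj O 0 [:: v]).
exact: eSucc (evProj O 1 [:: k; k + v; v]).
Qed.

Definition HALF := RPrec RZero (Add (RProj 1) (Odd (RProj 0))).
Definition Half x := RComp HALF [:: x].
Lemma eHalf x args u : eval O x args u -> eval O (Half x) args u./2.
Proof.
move=> H; apply: evComp (ev1 H) _.
apply: (prec_eval (h := half)) => [|k]; first exact: evZero.
have := eAdd (evProj O 1 [:: k; k./2]) (eOdd (evProj O 0 [:: k; k./2])).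
by rewrite /= uphalf_half addnC.
Qed.

Definition IterHalf y n := RComp (RPrec (RProj 0) (Half (RProj 1))) [:: y; n].
Lemma eIterHalf y n args u v : eval O y args u -> eval O n args v ->
  eval O (IterHalf y n) args (iter u half v).
Proof.
move=> Hy Hn; apply: evComp (ev2 Hy Hn) _.
apply: (prec_eval (h := fun u => iter u half v)) => [|k]; first exact: (evProj O 0 [:: v]).
exact: eHalf (evProj O 1 [:: k; _; v]).
Qed.

Definition membn (y n : nat) : bool := odd (iter y half n).
Definition Memb y n := Odd (IterHalf y n).
Lemma eMemb y n args u v : eval O y args u -> eval O n args v ->
  eval O (Memb y n) args (membn u v).
Proof. by move=> Hy Hn; apply: eOdd; apply: eIterHalf. Qed.

Definition Sub x b := RComp (RPrec (RProj 0) (Pred (RProj 1))) [:: b; x].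
Lemma eSub x b args u v : eval O x args u -> eval O b args v -> eval O (Sub x b) args (u - v).
Proof.
move=> Hx Hb; apply: evComp (ev2 Hb Hx) _.
apply: (prec_eval (h := fun v => u - v)) => [|k]; first by rewrite subn0; exact: (evProj O 0 [:: u]).
by rewrite subnS; exact: ePred (evProj O 1 [:: k; _; u]).
Qed.

Definition Orc x := RComp ROrc [:: x].
Lemma eOrc x args u : eval O x args u -> eval O (Orc x) args (O u).
Proof. by move=> H; apply: evComp (ev1 H) _; apply: (evOrc O [:: u]). Qed.

End Gadgets.

Fixpoint allR (P : rcode -> Prop) (gs : seq rcode) : Prop :=
  if gs is g :: gs' then P g /\ allR P gs' else True.

Section Ind.
Variable P : rcode -> Prop.
Hypotheses (HZ : P RZero) (HS : P RSucc) (HP : forall i, P (RProj i)) (HO : P ROrc)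
 (HC : forall f gs, P f -> allR P gs -> P (RComp f gs))
 (HR : forall f g, P f -> P g -> P (RPrec f g)) (HM : forall f, P f -> P (RMu f)).
Fixpoint rind (t : rcode) : P t :=
 match t with
 | RZero => HZ | RSucc => HS | RProj i => HP i | ROrc => HO
 | RComp f gs => HC (rind f) ((fix G gs : allR P gs := match gs with [::] => I | g :: gs' => conj (rind g) (G gs') end) gs)
 | RPrec f g => HR (rind f) (rind g) | RMu f => HM (rind f) end.
End Ind.

Section Inv.
Variable O : nat -> bool.
Lemma inv_zero a y : eval O RZero a y -> y = 0. Proof. by move=> H; inversion H. Qed.
Lemma inv_succ a y : eval O RSucc a y -> y = (head 0 a).+1. Proof. by move=> H; inversion H. Qed.
Lemma inv_proj i a y : eval O (RProj i) a y -> y = nth 0 a i. Proof. by move=> H; inversion H. Qed.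
Lemma inv_orc a y : eval O ROrc a y -> y = O (head 0 a). Proof. by move=> H; inversion H. Qed.
Lemma inv_comp f gs a y : eval O (RComp f gs) a y -> exists bs, evals O gs a bs /\ eval O f bs y.
Proof. by move=> H; inversion H; subst; eauto. Qed.
Lemma inv_precnil f g y : ~ eval O (RPrec f g) [::] y.
Proof. by move=> H; inversion H. Qed.
Lemma inv_prec0 f g a y : eval O (RPrec f g) (0 :: a) y -> eval O f a y.
Proof. by move=> H; inversion H. Qed.
Lemma inv_precS f g n a y : eval O (RPrec f g) (n.+1 :: a) y ->
  exists z, eval O (RPrec f g) (n :: a) z /\ eval O g (n :: z :: a) y.
Proof. by move=> H; inversion H; subst; eauto. Qed.
Lemma inv_mu f a n : eval O (RMu f) a n ->
  eval O f (n :: a) 0 /\ (forall k, k < n -> exists v, eval O f (k :: a) v /\ v <> 0).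
Proof. by move=> H; inversion H; subst; split. Qed.
Lemma inv_nil a bs : evals O [::] a bs -> bs = [::]. Proof. by move=> H; inversion H. Qed.
Lemma inv_cons g gs a bs : evals O (g :: gs) a bs ->
  exists b bs', [/\ bs = b :: bs', eval O g a b & evals O gs a bs'].
Proof. by move=> H; inversion H; subst; do 2 eexists; split; eauto. Qed.
End Inv.

Lemma eval_det O t : forall a y y', eval O t a y -> eval O t a y' -> y = y'.
Proof.
elim/rind: t.
- by move=> a y y' /inv_zero-> /inv_zero->.
- by move=> a y y' /inv_succ-> /inv_succ->.
- by move=> i a y y' /inv_proj-> /inv_proj->.
- by move=> a y y' /inv_orc-> /inv_orc->.
- move=> f gs IHf IHgs a y y' /inv_comp[bs [E1 H1]] /inv_comp[bs0 [E2 H2]].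
  suff E : bs = bs0 by subst; exact: IHf H1 H2.
  elim: gs bs bs0 IHgs E1 E2 {H1 H2} => [|g gs IH] bs bs0 /= IHgs E1 E2.
    by rewrite (inv_nil E1) (inv_nil E2).
  case/inv_cons: E1 => [b [bs' [-> Hb Hbs]]]; case/inv_cons: E2 => [b0 [bs0' [-> Hb0 Hbs0]]].
  by rewrite (proj1 IHgs _ _ _ Hb Hb0) (IH _ _ (proj2 IHgs) Hbs Hbs0).
- move=> f g IHf IHg [|n a] y y' H1; first by case: (inv_precnil H1).
  elim: n y y' H1 => [|n IH] y y' H1 H2.
    exact: IHf (inv_prec0 H1) (inv_prec0 H2).
  case/inv_precS: H1 => [z [Hz Hy]]; case/inv_precS: H2 => [z' [Hz' Hy']].
  have Ez := IH _ _ Hz Hz'; subst; exact: IHg Hy Hy'.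
- move=> f IHf a y y' /inv_mu[H0 H1] /inv_mu[H0' H1'].
  case: (ltngtP y y') => // Hlt.
  + have [v [Hv Hv0]] := H1' _ Hlt; by have E := IHf _ _ _ H0 Hv; rewrite -E in Hv0.
  + have [v [Hv Hv0]] := H1 _ Hlt; by have E := IHf _ _ _ H0' Hv; rewrite -E in Hv0.
Qed.

Definition allpos (rs : seq nat) : nat := foldr (fun r acc => if r == 0 then 0 else acc) 1 rs.
Fixpoint prf (F0 : nat) (G : nat -> nat -> nat) n :=
  if n is k.+1 then let z := prf F0 G k in if z == 0 then 0 else G k z else F0.
Fixpoint muf (R : nat -> nat) n :=
  if n is k.+1 then let acc := muf R k in
   if acc.-1 == 0 then (if acc == 0 then 0 else let r := R k in
       if r == 0 then 0 else if r.-1 == 0 then k.+2 else 1) else acc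
  else 1.

Fixpoint cf (O : nat -> bool) (t : rcode) (len s : nat) (a : seq nat) {struct t} : nat :=
 match t with
 | RZero => 1 | RSucc => (head 0 a).+2 | RProj i => (nth 0 a i).+1
 | ROrc => (O (head 0 a)).+1
 | RComp f gs => let rs := map (fun g => cf O g len s a) gs in
     if allpos rs == 0 then 0 else cf O f (size gs) s (map predn rs)
 | RPrec f g => if len is l.+1 then
     prf (cf O f l s (behead a)) (fun k z => cf O g l.+2 s (k :: z.-1 :: behead a)) (head 0 a)
     else 0
 | RMu f => (muf (fun k => cf O f len.+1 s (k :: a)) s).-1
 end.

Lemma allposE rs : allpos rs = all (fun r => r != 0) rs.
Proof. by elim: rs => //= r rs ->; case: (r == 0). Qed.
Lemma allposP rs : (allpos rs != 0) = all (fun r => r != 0) rs.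
Proof. by rewrite allposE; case: all. Qed.

Lemma muf1 R n : muf R n = 1 -> forall i, i < n -> 1 < R i.
Proof.
elim: n => // j IH /=.
case: (muf R j) IH => [|[|acc]] IH //=.
case E: (R j) => [|[|r]] //= _ i.
by rewrite ltnS leq_eqVlt => /orP[/eqP->|/(IH erefl)]; rewrite ?E.
Qed.

Lemma mufS R n k : muf R n = k.+2 -> R k = 1 /\ forall j, j < k -> 1 < R j.
Proof.
elim: n => // j IH /=.
case E0: (muf R j) IH => [|[|acc]] IH //=.
case E: (R j) => [|[|r]] //= [<-]; split => //; exact: muf1 E0.
Qed.

Lemma muf_reach R n : (forall k, k < n -> 1 < R k) -> R n = 1 ->
  forall s, n < s -> muf R s = n.+2.
Proof.
move=> Hlt Hn.
have H1 : forall j, j <= n -> muf R j = 1.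
  elim=> // j IH Hj /=; rewrite IH ?(ltnW Hj) //=.
  by have := Hlt _ Hj; case: (R j) => [|[|r]].
elim=> // s IH; rewrite ltnS leq_eqVlt => /orP[/eqP<-|Hs] /=.
  by rewrite H1 //= Hn.
by rewrite IH.
Qed.

Lemma cf_sound O t : forall len s a y, size a = len -> cf O t len s a = y.+1 -> eval O t a y.
Proof.
elim/rind: t.
- by move=> len s a y _ /= [<-]; apply: evZero.
- by move=> len s a y _ /= [<-]; apply: evSucc.
- by move=> i len s a y _ /= [<-]; apply: evProj.
- by move=> len s a y _ /= [<-]; apply: evOrc.
- move=> f gs IHf IHgs len s a y Hs /=.
  case: ifP => // /negbT Hp Hf.
  apply: evComp (IHf _ _ _ _ _ Hf); last by rewrite size_map size_map.
  move: Hp; rewrite allposP.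
  elim: gs IHgs {Hf} => [|g gs IH] /= IHgs Hp; first exact: evsNil.
  case/andP: Hp => Hg Hp; apply: evsCons; last exact: IH (proj2 IHgs) Hp.
  apply: ((proj1 IHgs) len s a _ Hs); by rewrite prednK // lt0n.
- move=> f g IHf IHg [|l] s a y //= Hs; case: a Hs => [|n a] //= [Hs].
  elim: n y => [|n IH] y /=; first by move=> H; apply: evPrec0; exact: IHf H.
  case E: (prf _ _ n) => [|z] //= H.
  apply: evPrecS (IH _ E) _; apply: IHg H; by rewrite /= Hs.
- move=> f IHf len s a y Hs /= H.
  have H2 : muf (fun k => cf O f len.+1 s (k :: a)) s = y.+2 by move: H; case: (muf _ _) => [|[|]] //= ? ->.
  case: (mufS H2) => /= Hy Hj.
  apply: evMu; first by apply: IHf Hy; rewrite /= Hs.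
  move=> k Hk; have := Hj _ Hk; case E: (cf O f len.+1 s (k :: a)) => [|[|v]] // _.
  exists v.+1; split => //; apply: IHf E; by rewrite /= Hs.
Qed.

Lemma collect (P : nat -> nat -> Prop) n :
  (forall k, k < n -> exists s0, forall s, s0 <= s -> P k s) ->
  exists s0, forall s, s0 <= s -> forall k, k < n -> P k s.
Proof.
elim: n => [|n IH] H; first by exists 0.
have [s1 H1] := IH (fun k Hk => H k (ltnW Hk)).
have [s2 H2] := H n (ltnSn n).
exists (maxn s1 s2) => s Hs k; rewrite ltnS leq_eqVlt => /orP[/eqP->|Hk].
  by apply: H2; apply: leq_trans Hs; apply: leq_maxr.
by apply: H1 => //; apply: leq_trans Hs; apply: leq_maxl.
Qed.

Lemma evals_size O gs a bs : evals O gs a bs -> size bs = size gs.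
Proof.
elim: gs bs => [|g gs IH] bs; first by move/inv_nil->.
by case/inv_cons=> [b [bs' [-> _ H]]] /=; rewrite (IH _ H).
Qed.

Lemma cf_complete O t : forall a y len, eval O t a y -> size a = len ->
  exists s0, forall s, s0 <= s -> cf O t len s a = y.+1.
Proof.
elim/rind: t.
- by move=> a y len /inv_zero-> _; exists 0.
- by move=> a y len /inv_succ-> _; exists 0.
- by move=> i a y len /inv_proj-> _; exists 0.
- by move=> a y len /inv_orc-> _; exists 0.
- move=> f gs IHf IHgs a y len /inv_comp[bs [Hbs Hf]] Hs.
  have [s1 H1] : exists s0, forall s, s0 <= s ->
      map (fun g => cf O g len s a) gs = map succn bs.
    elim: gs bs IHgs Hbs {Hf} => [|g gs IH] bs IHgs Hbs; first by rewrite (inv_nil Hbs); exists 0.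
    case/inv_cons: Hbs => [b [bs' [-> Hb Hbs']]].
    have [s2 H2] := IH _ (proj2 IHgs) Hbs'.
    have [s3 H3] := (proj1 IHgs) _ _ _ Hb Hs.
    exists (maxn s2 s3) => s Hsm /=; rewrite H2 ?H3 //; apply: leq_trans Hsm.
      exact: leq_maxr.
    exact: leq_maxl.
  have [s2 H2] := IHf _ _ _ Hf (erefl (size bs)).
  exists (maxn s1 s2) => s Hsm /=; rewrite H1; last by apply: leq_trans Hsm; apply: leq_maxl.
  have -> : allpos (map succn bs) == 0 = false by rewrite -[_ == 0]negbK allposP all_map; apply/allP.
  rewrite -map_comp map_id_in // -(evals_size Hbs); apply: H2.
  by apply: leq_trans Hsm; apply: leq_maxr.
- move=> f g IHf IHg [|n a] y len H; first by case: (inv_precnil H).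
  move=> Hs; case: len Hs => [|l] //= [Hs].
  elim: n y H => [|n IH] y H /=.
    by apply: IHf (inv_prec0 H) Hs.
  case/inv_precS: H => [z [Hz Hy]].
  have [s1 H1] := IH _ Hz.
  have [s2 H2] := IHg _ _ _ Hy (erefl (size (n :: z :: a))).
  exists (maxn s1 s2) => s Hsm; rewrite H1 /=; last by apply: leq_trans Hsm; apply: leq_maxl.
  by rewrite -Hs H2 //; apply: leq_trans Hsm; apply: leq_maxr.
- move=> f IHf a y len /inv_mu[H0 H1] Hs.
  have [s1 Hs1] : exists s0, forall s, s0 <= s -> forall k, k < y -> 1 < cf O f len.+1 s (k :: a).
    apply: collect => k Hk; have [v [Hv Hv0]] := H1 k Hk.
    have [s0 H] := IHf _ _ _ Hv (f_equal succn Hs).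
    exists s0 => s Hs0; rewrite H //; by case: v Hv Hv0 {H}.
  have [s2 Hs2] := IHf _ _ _ H0 (f_equal succn Hs).
  exists (maxn (maxn s1 s2) y.+1) => s Hsm /=.
  rewrite (@muf_reach _ y) //.
  - move=> k Hk; apply: Hs1 => //; apply: leq_trans Hsm; apply: leq_trans (leq_maxl _ _); exact: leq_maxl.
  - apply: Hs2; apply: leq_trans Hsm; apply: leq_trans (leq_maxl _ _); exact: leq_maxr.
  - by apply: leq_trans Hsm; apply: leq_maxr.
Qed.

Definition agree (O O' : nat -> bool) b := forall x, x < b -> O' x = O x.
Lemma agree_le O O' b b' : b <= b' -> agree O O' b' -> agree O O' b.
Proof. by move=> Hb H x Hx; apply: H; apply: leq_trans Hb. Qed.
Lemma agree_l O O' b b' : agree O O' (maxn b b') -> agree O O' b.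
Proof. by apply: agree_le; apply: leq_maxl. Qed.
Lemma agree_r O O' b b' : agree O O' (maxn b b') -> agree O O' b'.
Proof. by apply: agree_le; apply: leq_maxr. Qed.

Lemma cf_use O t : forall len s a, exists b, forall O', agree O O' b ->
  cf O' t len s a = cf O t len s a.
Proof.
elim/rind: t.
- by move=> len s a; exists 0.
- by move=> len s a; exists 0.
- by move=> i len s a; exists 0.
- by move=> len s a; exists (head 0 a).+1 => O' H /=; rewrite H.
- move=> f gs IHf IHgs len s a.
  have [b1 H1] : exists b, forall O', agree O O' b ->
      map (fun g => cf O' g len s a) gs = map (fun g => cf O g len s a) gs.
    elim: gs IHgs => [|g gs IH] IHgs; first by exists 0.
    have [b2 H2] := IH (proj2 IHgs); have [b3 H3] := (proj1 IHgs) len s a.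
    exists (maxn b2 b3) => O' HO /=; rewrite H2 ?H3 //; [exact: agree_r HO|exact: agree_l HO].
  have [b2 H2] := IHf (size gs) s (map predn (map (fun g => cf O g len s a) gs)).
  exists (maxn b1 b2) => O' HO /=; rewrite H1 ?H2 //; [exact: agree_r HO|exact: agree_l HO].
- move=> f g IHf IHg [|l] s a; first by exists 0.
  rewrite /=; elim: (head 0 a) => [|n [b1 H1]] /=; first exact: IHf.
  set z := prf _ _ n.
  have [b2 H2] := IHg l.+2 s (n :: z.-1 :: behead a).
  exists (maxn b1 b2) => O' HO; rewrite H1 ?H2 //; [exact: agree_r HO|exact: agree_l HO].
- move=> f IHf len s a.
  suff H : forall n, exists b, forall O', agree O O' b ->
      muf (fun k => cf O' f len.+1 s (k :: a)) n = muf (fun k => cf O f len.+1 s (k :: a)) n.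
    by have [b Hb] := H s; exists b => O' HO /=; rewrite Hb.
  elim=> [|n [b1 H1]] /=; first by exists 0.
  have [b2 H2] := IHf len.+1 s (n :: a).
  exists (maxn b1 b2) => O' HO; rewrite H1 ?H2 //; [exact: agree_r HO|exact: agree_l HO].
Qed.

Definition projs (i n : nat) := map RProj (iota i n).
Lemma eprojs O p a : evals O (projs (size p) (size a)) (p ++ a) a.
Proof.
rewrite /projs; elim: a p => [|x a IH] p /=; first exact: evsNil.
apply: evsCons; first by have := evProj O (size p) (p ++ x :: a); rewrite nth_cat ltnn subnn.
by have := IH (rcons p x); rewrite size_rcons cat_rcons.
Qed.

Fixpoint comp (orc : rcode) (t : rcode) (len : nat) {struct t} : rcode :=
 match t with
 | RZero => cst 1
 | RSucc => Succ (Succ (RProj 2))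
 | RProj i => Succ (RProj i.+2)
 | ROrc => Succ orc
 | RComp f gs => Cond (foldr (fun p acc => Cond p acc) (cst 1) (map (fun g => comp orc g len) gs))
        (RComp (comp orc f (size gs)) (RProj 0 :: RProj 1 :: map (fun g => Pred (comp orc g len)) gs))
 | RPrec f g => if len is l.+1 then
     RComp (RPrec (comp orc f l)
              (Cond (RProj 1) (RComp (comp orc g l.+2) (RProj 2 :: RProj 3 :: RProj 0 :: Pred (RProj 1) :: projs 4 l))))
           (RProj 2 :: RProj 0 :: RProj 1 :: projs 3 l)
     else cst 0
 | RMu f => Pred (RComp (RPrec (cst 1)
      (If0 (Pred (RProj 1)) (If0 (RProj 1) (cst 0)
          (If0 (RComp (comp orc f len.+1) (RProj 2 :: RProj 3 :: RProj 0 :: projs 4 len)) (cst 0)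
             (If0 (Pred (RComp (comp orc f len.+1) (RProj 2 :: RProj 3 :: RProj 0 :: projs 4 len)))
                  (Succ (Succ (RProj 0))) (cst 1))))
         (RProj 1)))
      (RProj 0 :: RProj 0 :: RProj 1 :: projs 2 len))
 end.

Section Comp.
Variables (C : nat -> bool) (orc : rcode) (Oe : nat -> nat -> bool).
Hypothesis Horc : forall s e a, eval C orc (s :: e :: a) (Oe e (head 0 a)).

Lemma comp_ok t : forall len s e a, size a = len ->
  eval C (comp orc t len) (s :: e :: a) (cf (Oe e) t len s a).
Proof.
elim/rind: t.
- by move=> len s e a _; apply: ecst.
- by move=> len s e a _; do 2 apply: eSucc; apply: (evProj C 2 [:: s, e & a]).
- by move=> i len s e a _; apply: eSucc; apply: (evProj C i.+2 [:: s, e & a]).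
- by move=> len s e a _; apply: eSucc; apply: Horc.
- move=> f gs IHf IHgs len s e a Hs /=.
  have [H1 H2] : eval C (foldr (fun p acc => Cond p acc) (cst 1) (map (fun g => comp orc g len) gs))
        (s :: e :: a) (allpos (map (fun g => cf (Oe e) g len s a) gs)) /\
      evals C (map (fun g => Pred (comp orc g len)) gs) (s :: e :: a)
        (map predn (map (fun g => cf (Oe e) g len s a) gs)).
    elim: gs IHgs {IHf} => [|g gs IH] /= IHgs; first by split; [exact: (ecst C 1 _)|apply: evsNil].
    have [H1 H2] := IH (proj2 IHgs); have Hg := (proj1 IHgs) len s e a Hs.
    split; first exact: eCond Hg H1.
    by apply: evsCons => //; apply: ePred.
  apply: eCond H1 _; apply: evComp (IHf _ s e _ _).
    by apply: evsCons; [apply: (evProj C 0)|apply: evsCons; [apply: (evProj C 1)|exact: H2]].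
  by rewrite !size_map.
- move=> f g IHf IHg [|l] s e a Hs /=; first by exact: (ecst C 0 _).
  case: a Hs => [|n a] //= [Hs].
  apply: evComp; last first.
    apply: prec_eval => [|k]; first exact: IHf.
    apply: eCond; first exact: (evProj C 1 [:: k, _, s, e & a]).
    apply: evComp; last by apply: IHg; rewrite /= Hs.
    apply: evsCons; first exact: (evProj C 2 [:: k, _, s, e & a]).
    apply: evsCons; first exact: (evProj C 3 [:: k, _, s, e & a]).
    apply: evsCons; first exact: (evProj C 0 [:: k, _, s, e & a]).
    apply: evsCons; first exact: ePred (evProj C 1 [:: k, _, s, e & a]).
    by rewrite -Hs; exact: (eprojs C [:: k; _; s; e] a).
  apply: evsCons; first exact: (evProj C 2 [:: s, e, n & a]).
  apply: evsCons; first exact: (evProj C 0 [:: s, e, n & a]).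
  apply: evsCons; first exact: (evProj C 1 [:: s, e, n & a]).
  by rewrite -Hs; exact: (eprojs C [:: s; e; n] a).
- move=> f IHf len s e a Hs /=.
  apply: ePred; apply: evComp; last first.
    apply: prec_eval => [|k]; first exact: (ecst C 1 _).
    have Hf : eval C (RComp (comp orc f len.+1) (RProj 2 :: RProj 3 :: RProj 0 :: projs 4 len))
        [:: k, muf (fun k => cf (Oe e) f len.+1 s (k :: a)) k, s, e & a]
        (cf (Oe e) f len.+1 s (k :: a)).
      apply: evComp; last by apply: IHf; rewrite /= Hs.
      apply: evsCons; first exact: (evProj C 2 [:: k, _, s, e & a]).
      apply: evsCons; first exact: (evProj C 3 [:: k, _, s, e & a]).
      apply: evsCons; first exact: (evProj C 0 [:: k, _, s, e & a]).
      by rewrite -Hs; exact: (eprojs C [:: k; _; s; e] a).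
    apply: eIf0; first exact: ePred (evProj C 1 [:: k, _, s, e & a]).
      apply: eIf0; first exact: (evProj C 1 [:: k, _, s, e & a]).
        exact: (ecst C 0 _).
      apply: eIf0; first exact: Hf.
        exact: (ecst C 0 _).
      apply: eIf0; first exact: ePred Hf.
        exact: eSucc (eSucc (evProj C 0 [:: k, _, s, e & a])).
      exact: (ecst C 1 _).
    exact: (evProj C 1 [:: k, _, s, e & a]).
  apply: evsCons; first exact: (evProj C 0 [:: s, e & a]).
  apply: evsCons; first exact: (evProj C 0 [:: s, e & a]).
  apply: evsCons; first exact: (evProj C 1 [:: s, e & a]).
  by rewrite -Hs; exact: (eprojs C [:: s; e] a).
Qed.
End Comp.

Definition enc (l : seq bool) : nat := foldr (fun (b : bool) acc => nat_of_bool b + acc.*2) 0 l.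
Lemma membn_enc l y : membn y (enc l) = nth false l y.
Proof.
rewrite /membn; elim: l y => [|b l IH] [|y] /=.
- by [].
- by rewrite iter_fix.
- by rewrite oddD odd_double addbF oddb.
- by rewrite -iterS iterSr half_bit_double IH.
Qed.

Lemma membn_lt y e : membn y e -> y < e.
Proof.
rewrite /membn; elim: y e => [|y IH] e /=; first by case: e.
rewrite -iterS iterSr => /IH H.
have := odd_double_half e; rewrite -muln2; lia.
Qed.

Lemma size_vargs m k V : size (vargs m k V) = m * k.
Proof.
rewrite /vargs.
suff H : forall l, size (flatten [seq [seq V i j | j <- iota 0 k] | i <- l]) = size l * k.
  by rewrite H size_iota.
elim=> [|i l IH] //=.
by rewrite size_cat size_map size_iota IH mulSn.
Qed.

Section Main.
Variables (C F X : nat -> bool) (tX : rcode) (f0 : nat) (t : rcode) (L : nat).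
Hypothesis HX : forall x, eval C tX [:: x] (X x).
Hypothesis Hf0 : forall y, membn y f0 = F y.

Definition Ge (e y : nat) : bool := F y || X y && membn y e.
Definition Oe e := join C (Ge e).

Definition GEp (e y : rcode) := If0 (Memb y (cst f0)) (Cond (RComp tX [:: y]) (Memb y e)) (cst 1).
Definition ORC := If0 (Odd (RProj 2)) (Orc (Half (RProj 2))) (GEp (RProj 1) (Half (RProj 2))).

Lemma Horc s e a : eval C ORC (s :: e :: a) (Oe e (head 0 a)).
Proof.
have Hx : eval C (RProj 2) (s :: e :: a) (head 0 a).
  by have := evProj C 2 [:: s, e & a]; case: a.
have Hy := eHalf Hx.
have := eIf0 (eOdd Hx) (eOrc Hy)
  (eIf0 (eMemb Hy (ecst C f0 _)) (eCond (evComp (ev1 Hy) (HX _)) (eMemb Hy (evProj C 1 [:: s, e & a])))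
     (ecst C 1 _)).
rewrite /Oe /join /Ge Hf0 /=.
by case: (odd _); case: (F _); case: (X _); case: (membn _ _).
Qed.

Fixpoint lvv (p : nat) (a : seq nat) (n : nat) : nat :=
  if n is k.+1 then (if lvv p a k == 0 then cf (Oe k) t L p a else lvv p a k) else 0.
Definition Tval p a := if lvv p a p == 0 then 1 else 0.

Definition TSTEP := If0 (RProj 1) (RComp (comp ORC t L) (RProj 2 :: RProj 0 :: projs 3 L)) (RProj 1).
Definition LOOP := RComp (RPrec (cst 0) TSTEP) (RProj 0 :: RProj 0 :: projs 1 L).
Definition TP := If0 LOOP (cst 1) (cst 0).
Definition PP := RMu TP.

Lemma eT p a : size a = L -> eval C TP (p :: a) (Tval p a).
Proof.
move=> Hs; apply: eIf0; last exact: ecst; last exact: ecst.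
apply: evComp; last first.
  apply: (prec_eval (h := lvv p a)) => [|k]; first exact: (ecst C 0 _).
  apply: eIf0; first exact: (evProj C 1 [:: k, _, p & a]).
    apply: evComp; last by apply: (comp_ok Horc).
    apply: evsCons; first exact: (evProj C 2 [:: k, _, p & a]).
    apply: evsCons; first exact: (evProj C 0 [:: k, _, p & a]).
    by rewrite -Hs; exact: (eprojs C [:: k; _; p] a).
  exact: (evProj C 1 [:: k, _, p & a]).
apply: evsCons; first exact: (evProj C 0 [:: p & a]).
apply: evsCons; first exact: (evProj C 0 [:: p & a]).
by rewrite -Hs; exact: (eprojs C [:: p] a).
Qed.

Lemma lvv_spec p a n : (lvv p a n != 0) <-> exists e, e < n /\ cf (Oe e) t L p a != 0.
Proof.
elim: n => [|n IH] /=; first by split => // [[e []]].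
case: ifP => [/eqP H0|/negbT H0]; split.
- by move=> H; exists n.
- case=> e [He Hc]; move: He; rewrite ltnS leq_eqVlt => /orP[/eqP Ee|He]; first by rewrite -Ee.
  by have := (proj2 IH) (ex_intro _ e (conj He Hc)); rewrite H0.
- by move=> _; have [e [He Hc]] := (proj1 IH) H0; exists e; split => //; apply: ltnW.
- by [].
Qed.


Lemma K1 a y : size a = L -> eval C PP a y -> exists e z, eval (Oe e) t a z.
Proof.
move=> Hs /inv_mu[H0 _].
have := eval_det H0 (eT y Hs); rewrite /Tval; case: ifP => // /negbT H _.
have [e [_ Hc]] := (proj1 (lvv_spec y a y)) H.
exists e; move: Hc; case E: (cf _ _ _ _ _) => [|z] // _.
by exists z; apply: cf_sound E.
Qed.

Lemma K2 a e z : size a = L -> eval (Oe e) t a z -> exists y, eval C PP a y.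
Proof.
move=> Hs Hz.
have [s1 Hs1] := cf_complete Hz Hs.
pose p := maxn s1 e.+1.
have Hp : Tval p a == 0.
  rewrite /Tval; case: ifP => // /eqP H.
  have : lvv p a p != 0.
    apply/(lvv_spec p a p); exists e; split; first exact: leq_maxr.
    by rewrite Hs1 //; apply: leq_maxl.
  by rewrite H.
have Hex : exists p, Tval p a == 0 by exists p.
exists (ex_minn Hex); case: ex_minnP => n Hn Hmin.
apply: evMu; first by rewrite -(eqP Hn); exact: eT.
move=> k Hk; exists (Tval k a); split; first exact: eT.
move=> /eqP Hk0; have := Hmin _ Hk0; by rewrite leqNgt Hk.
Qed.

Lemma shrink (G : nat -> bool) a y : (forall x, F x -> G x) -> (forall x, G x -> ~~ F x -> X x) ->
  size a = L -> eval (join C G) t a y -> exists e z, eval (Oe e) t a z.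
Proof.
move=> HFG HGX Hs Hy.
have [s0 Hs0] := cf_complete Hy Hs.
have [b Hb] := cf_use (join C G) t L s0 a.
pose e := enc (mkseq G b).
have Hag : agree (join C G) (Oe e) b.
  move=> x Hx; rewrite /Oe /join; case: (odd x) => //.
  have Hxb : x./2 < b by apply: leq_ltn_trans Hx; rewrite leq_half_double -addnn; lia.
  rewrite /Ge /e membn_enc nth_mkseq //.
  case EG: (G x./2); rewrite ?andbT ?andbF ?orbF.
    by case EF: (F x./2) => //=; rewrite HGX // EF.
  by apply/negbTE/negP => /HFG; rewrite EG.
have := Hb _ Hag; rewrite Hs0 // => Hc.
by exists e, y; apply: cf_sound Hc.
Qed.

End Main.

Unset Implicit Arguments.
Theorem mainTheorem10 (n : nat) (A0 A1 : seq bool -> Prop) (C : nat -> bool)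
  (F X : nat -> bool) (m : nat) (phi : (nat -> bool) -> valuation -> Prop) (M : matrix) :
  1 <= n ->
  fair n C A0 A1 ->
  mathias F X ->
  computable_from C X ->
  1 <= m ->
  sigma1_param C m (2 ^ n * m) phi ->
  disjoint_matrix m (2 ^ n * m) M ->
  exists E Y : nat -> bool,
    [/\ mathias E Y, mextends E Y F X, computable_from C Y &
      (forall G, msatisfies G E Y -> ~ essential m (2 ^ n * m) (phi G) M) \/
      (exists V, [/\ is_valuation m (2 ^ n * m) M V,
                     diagonalizes m (2 ^ n * m) V A0 A1 & phi E V])].
Proof.
move=> Hn Hfair HFX [tX HX] Hm [t Ht] Hdisj.
have HFX' := HFX; case: HFX' => [[bF HbF] Xinf FX].
set K := 2 ^ n * m.
pose f0 := enc (mkseq F bF).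
have Hf0 : forall y, membn y f0 = F y.
  move=> y; rewrite /f0 membn_enc; case: (ltnP y bF) => Hy; first by rewrite nth_mkseq.
  rewrite nth_default ?size_mkseq //; case E: (F y) => //; have := HbF _ E; by rewrite ltnNge Hy.
pose L := m * K.
pose psi := fun V => exists y, eval C (PP tX f0 t L) (vargs m K V) y.
have Hpsi : sigma1_in C m K psi by exists (PP tX f0 t L).
case: (classic (essential m K psi M)) => Hess.
- have [V [HV Hdiag [y Hy]]] := Hfair m psi M Hpsi Hdisj Hess.
  have [e [z Hz]] := K1 HX Hf0 (size_vargs m K V) Hy.
  have HphiE : phi (Ge F X e) V by apply/Ht; exists z.
  pose B := bF + e.
  have HEB : forall x, Ge F X e x -> x < B.
    move=> x /orP[/HbF H|/andP[_ /membn_lt H]]; rewrite /B; lia.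
  exists (Ge F X e), (fun x => X x && (B < x)); split.
  + split.
    * by exists B.
    * move=> k; have [x [Hx HXx]] := Xinf (maxn k B.+1).
      exists x; split; first by apply: leq_trans Hx; apply: leq_maxl.
      rewrite HXx /=; apply: leq_trans Hx; apply: leq_maxr.
    * by move=> x w /HEB Hx /andP[_ Hw]; apply: ltn_trans Hw.
  + split.
    * by move=> x Fx; rewrite /Ge Fx.
    * by move=> x /andP[].
    * by move=> x; rewrite /Ge => /orP[->//|/andP[]].
  + exists (Cond (RComp tX [:: RProj 0]) (Cond (Sub (RProj 0) (cst B)) (cst 1))) => x.
    have := eCond (evComp (ev1 (evProj C 0 [:: x])) (HX x))
      (eCond (eSub (evProj C 0 [:: x]) (ecst C B _)) (ecst C 1 _)).
    rewrite /= subn_eq0 leqNgt; by case: (X x); case: (B < x).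
  + by right; exists V; split.
- exists F, X; split.
  + exact: HFX.
  + by split => // x ->.
  + by exists tX.
  + left => G [HFG HGX] HessG; apply: Hess => s.
    have [V [HV HVs HphiG]] := HessG s; exists V; split => //.
    have [y Hy] := (proj1 (Ht G V)) HphiG.
    have [e [z Hz]] := shrink HFG HGX (size_vargs m K V) Hy.
    rewrite /psi; exact: (K2 (L:=L) HX Hf0 (size_vargs m K V) Hz).
Qed.
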